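(* Let each $f_\xi:\mathbb{R}^d\to\mathbb{R}$ ($\xi\sim\mathcal{D}$) be differentiable and $\mu$-strongly convex with $\mu>0$, let $f=\mathbb{E}_{\xi\sim\mathcal{D}}[f_\xi]$ with minimizer $x_\star$, and suppose there exists $\delta\ge0$ with $\mathbb{E}_{\xi\sim\mathcal{D}}\|\nabla f_\xi(x)-\nabla f(x)-\nabla f_\xi(x_\star)\|^2\le\delta^2\|x-x_\star\|^2$ for all $x\in\mathbb{R}^d$. Consider SPPM-GC: from arbitrary $x_0\in\mathbb{R}^d$, sample $\xi_k\sim\mathcal{D}$ independently and set $x_{k+1}=\operatorname{prox}_{\gamma f_{\xi_k}}\big(x_k+\gamma(\nabla f_{\xi_k}(x_k)-\nabla f(x_k))\big)$. Then for any $\gamma>0$ and all $k\ge0$, $$\mathbb{E}\|x_k-x_\star\|^2\le\left(\frac{1+\gamma^2\delta^2}{(1+\gamma\mu)^2}\right)^k\|x_0-x_\star\|^2.$$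
   Context: $\operatorname{prox}_{\gamma\phi}(y):=\arg\min_{x\in\mathbb{R}^d}\{\phi(x)+\frac{1}{2\gamma}\|x-y\|^2\}$. $\mu$-strong convexity of $g$: $g(y)+\langle\nabla g(y),x-y\rangle+\frac{\mu}{2}\|x-y\|^2\le g(x)$ for all $x,y$. $\nabla f=\mathbb{E}[\nabla f_\xi]$. *)

(* Defs.v *)
From HB Require Import structures.
From mathcomp Require Import all_boot all_order all_algebra.
From mathcomp Require Import all_classical all_reals all_analysis.
Set Implicit Arguments. Unset Strict Implicit. Unset Printing Implicit Defensive.
Import Order.TTheory GRing.Theory Num.Theory.
Import numFieldNormedType.Exports.
Local Open Scope classical_set_scope.
Local Open Scope ring_scope.

Definition dotv (R : realType) (d : nat) (u v : 'rV[R]_d) : R :=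
  \sum_(i < d) u 0 i * v 0 i.
Definition sqnorm (R : realType) (d : nat) (v : 'rV[R]_d) : R :=
  \sum_(i < d) v 0 i ^+ 2.

Definition grad (R : realType) (d : nat) (phi : 'rV[R]_d -> R) (x : 'rV[R]_d)
  : 'rV[R]_d := \row_(i < d) ('d phi x) (delta_mx 0 i).

Definition prox (R : realType) (d : nat) (phi : 'rV[R]_d -> R) (gamma : R)
  (y : 'rV[R]_d) : 'rV[R]_d :=
  xget 0 [set p | forall x, phi p + (2 * gamma)^-1 * sqnorm (p - y)
                          <= phi x + (2 * gamma)^-1 * sqnorm (x - y)].

Definition strongly_convex (R : realType) (d : nat) (mu : R)
  (g : 'rV[R]_d -> R) : Prop :=
  forall x y, g y + dotv (grad g y) (x - y) + mu / 2 * sqnorm (x - y) <= g x.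

Section Sppm.
Context (R : realType) (d : nat) (dx : measure_display) (Xi : measurableType dx)
  (D : probability Xi R) (F : Xi -> 'rV[R]_d -> R).

Definition fexp (x : 'rV[R]_d) : R := Rintegral D setT (fun xi => F xi x).

(* grad f = E_xi [grad f_xi]  (coordinatewise expectation) *)
Definition gradf (x : 'rV[R]_d) : 'rV[R]_d :=
  \row_(i < d) Rintegral D setT (fun xi => grad (F xi) x 0 i).

Definition sppm_gc_step (gamma : R) (xi : Xi) (x : 'rV[R]_d) : 'rV[R]_d :=
  prox (F xi) gamma (x + gamma *: (grad (F xi) x - gradf x)).

(* sppm_gc_err gamma xs k x = E || x_k - xs ||^2, where x_0 = x and
   x_{j+1} = sppm_gc_step gamma xi_j x_j with xi_0, xi_1, ... i.i.d. ~ D.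
   (Expectation over the i.i.d. samples written as iterated integrals.) *)
Fixpoint sppm_gc_err (gamma : R) (xs : 'rV[R]_d) (k : nat) (x : 'rV[R]_d)
  : \bar R :=
  match k with
  | 0 => (sqnorm (x - xs))%:E
  | k'.+1 => (\int[D]_(xi in setT) sppm_gc_err gamma xs k' (sppm_gc_step gamma xi x))%E
  end.

End Sppm.

(* Main.v *)
Require Import Defs.
From HB Require Import structures.
From mathcomp Require Import all_boot all_order all_algebra.
From mathcomp Require Import all_classical all_reals all_analysis.
From mathcomp Require Import ring lra.
Import Order.TTheory GRing.Theory Num.Theory.
Import numFieldNormedType.Exports.
Local Open Scope classical_set_scope.
Local Open Scope ring_scope.



Section Alg.
Context {R : realType} {d : nat}.
Implicit Types u v w : 'rV[R]_d.

Lemma dotvC u v : dotv u v = dotv v u.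
Proof. by apply: eq_bigr => i _; rewrite mulrC. Qed.
Lemma dotvDl u v w : dotv (u + v) w = dotv u w + dotv v w.
Proof. by rewrite /dotv -big_split; apply: eq_bigr => i _; rewrite mxE mulrDl. Qed.
Lemma dotvDr u v w : dotv w (u + v) = dotv w u + dotv w v.
Proof. by rewrite dotvC dotvDl !(dotvC w). Qed.
Lemma dotvZl (a : R) u v : dotv (a *: u) v = a * dotv u v.
Proof. by rewrite /dotv mulr_sumr; apply: eq_bigr => i _; rewrite mxE mulrA. Qed.
Lemma dotvZr (a : R) u v : dotv u (a *: v) = a * dotv u v.
Proof. by rewrite dotvC dotvZl dotvC. Qed.
Lemma dotvNl u v : dotv (- u) v = - dotv u v.
Proof. by rewrite -scaleN1r dotvZl mulN1r. Qed.
Lemma dotvNr u v : dotv u (- v) = - dotv u v.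
Proof. by rewrite dotvC dotvNl dotvC. Qed.
Lemma dotvBl u v w : dotv (u - v) w = dotv u w - dotv v w.
Proof. by rewrite dotvDl dotvNl. Qed.
Lemma dotvBr u v w : dotv w (u - v) = dotv w u - dotv w v.
Proof. by rewrite dotvDr dotvNr. Qed.
Lemma dotv0r u : dotv u 0 = 0.
Proof. by rewrite /dotv big1 // => i _; rewrite mxE mulr0. Qed.
Lemma dotvv u : dotv u u = sqnorm u.
Proof. by apply: eq_bigr => i _; rewrite expr2. Qed.
Lemma sqnormD u v : sqnorm (u + v) = sqnorm u + 2 * dotv u v + sqnorm v.
Proof. by rewrite -!dotvv dotvDl !dotvDr (dotvC v u); ring. Qed.
Lemma sqnormB u v : sqnorm (u - v) = sqnorm u - 2 * dotv u v + sqnorm v.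
Proof. by rewrite -!dotvv dotvBl !dotvBr (dotvC v u); ring. Qed.
Lemma sqnormZ (a : R) u : sqnorm (a *: u) = a ^+ 2 * sqnorm u.
Proof. by rewrite -!dotvv dotvZl dotvZr mulrA expr2. Qed.
Lemma sqnorm_ge0 u : 0 <= sqnorm u.
Proof. by rewrite /sqnorm sumr_ge0 // => i _; rewrite sqr_ge0. Qed.
Lemma sqnormN u : sqnorm (- u) = sqnorm u.
Proof. by rewrite -scaleN1r sqnormZ sqrrN expr1n mul1r. Qed.
Lemma sqnorm0 : sqnorm (0 : 'rV[R]_d) = 0.
Proof. by rewrite -dotvv dotv0r. Qed.
Lemma coord_le_sqnorm u i : u 0 i ^+ 2 <= sqnorm u.
Proof.
rewrite /sqnorm (bigD1 i) //= lerDl sumr_ge0 // => j _; exact: sqr_ge0.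
Qed.
Lemma young u v (s : R) : 2 * s * dotv u v <= sqnorm u + s ^+ 2 * sqnorm v.
Proof.
have := sqnorm_ge0 (u - s *: v); rewrite sqnormB sqnormZ dotvZr; lra.
Qed.
Lemma youngN u v (s : R) : - (2 * s * dotv u v) <= sqnorm u + s ^+ 2 * sqnorm v.
Proof.
have := sqnorm_ge0 (u + s *: v); rewrite sqnormD sqnormZ dotvZr; lra.
Qed.
Lemma entryD u v i : (u + v) 0 i = u 0 i + v 0 i.
Proof. by rewrite !mxE. Qed.
Lemma entryB u v i : (u - v) 0 i = u 0 i - v 0 i.
Proof. by rewrite !mxE. Qed.
Lemma entryZ (a : R) u i : (a *: u) 0 i = a * u 0 i.
Proof. by rewrite !mxE. Qed.
Lemma entry0 i : (0 : 'rV[R]_d) 0 i = 0.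
Proof. by rewrite mxE. Qed.
End Alg.


Section Prox.
Context {R : realType} {d : nat}.
Implicit Types u v w : 'rV[R]_d.

Definition scg (mu : R) (phi : 'rV[R]_d -> R) (g : 'rV[R]_d -> 'rV[R]_d) :=
  forall x y, phi y + dotv (g y) (x - y) + mu / 2 * sqnorm (x - y) <= phi x.

Lemma sc_comb {mu phi g} : scg mu phi g -> forall a b (t : R), 0 <= t <= 1 ->
  phi (a + t *: (b - a)) <= (1 - t) * phi a + t * phi b
                            - mu * t * (1 - t) / 2 * sqnorm (b - a).
Proof.
move=> H a b t /andP[t0 t1].
set w := a + t *: (b - a).
have ea : a - w = (- t) *: (b - a) by apply/rowP => i; rewrite !mxE; ring.
have eb : b - w = (1 - t) *: (b - a) by apply/rowP => i; rewrite !mxE; ring.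
have Ha := H a w; have Hb := H b w.
rewrite ea sqnormZ dotvZr in Ha; rewrite eb sqnormZ dotvZr in Hb.
have t1' : 0 <= 1 - t by lra.
have := ler_wpM2l t1' Ha; have := ler_wpM2l t0 Hb.
set S := sqnorm (b - a); set G := dotv (g w) (b - a).
move=> h1 h2.
nra.
Qed.

Lemma prox_contr mu phi g (gamma : R) y p z : 0 <= mu -> 0 < gamma ->
  scg mu phi g ->
  (forall x, phi p + (2 * gamma)^-1 * sqnorm (p - y)
             <= phi x + (2 * gamma)^-1 * sqnorm (x - y)) ->
  (1 + gamma * mu) ^+ 2 * sqnorm (p - z) <= sqnorm (y - z - gamma *: g z).
Proof.
move=> mu0 g0 Hsc Hmin.
set D := sqnorm (z - p).
set B := dotv (p - y) (z - p).
have D0 : 0 <= D by exact: sqnorm_ge0.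
have key : phi p <= phi z - mu / 2 * D + gamma^-1 * B.
  apply/ler_addgt0Pr => e e0.
  set c := mu / 2 * D + (2 * gamma)^-1 * D.
  have c0 : 0 <= c.
    by rewrite addr_ge0 // mulr_ge0 // ?invr_ge0 ?mulr_ge0 //; lra.
  set t := e / (c + e + 1).
  have ce0 : 0 < c + e + 1 by lra.
  have t0 : 0 < t by rewrite divr_gt0.
  have t1 : t <= 1 by rewrite ler_pdivrMr //; lra.
  have tc : t * c <= e.
    by rewrite /t mulrAC ler_pdivrMr //; nra.
  have Hw := Hmin (p + t *: (z - p)).
  have ew : p + t *: (z - p) - y = (p - y) + t *: (z - p).
    by apply/rowP => i; rewrite !mxE; ring.
  rewrite ew (sqnormD (p - y)) sqnormZ dotvZr -/B -/D in Hw.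
  have Hc := sc_comb Hsc p z t; rewrite -/D in Hc.
  have {}Hc := Hc ltac:(apply/andP; split => //; exact: ltW).
  set W := phi (p + t *: (z - p)) in Hw Hc.
  have ek : gamma^-1 = 2 * (2 * gamma)^-1 by rewrite invfM; field; lra.
  rewrite ek.
  have h : t * (phi p - phi z + mu * (1 - t) / 2 * D - 2 * (2 * gamma)^-1 * B - (2 * gamma)^-1 * t * D) <= 0.
    lra.
  rewrite pmulr_rle0 // in h.
  rewrite /c in tc.
  nra.
have Hz := Hsc p z.
have epz : p - z = - (z - p) by rewrite opprB.
rewrite epz sqnormN -/D in Hz.
set u := y - z - gamma *: g z.
have eB : B = - dotv u (z - p) - gamma * dotv (g z) (z - p) - D.
  rewrite /B.
  have -> : p - y = - u - gamma *: g z + (- (z - p)).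
    by rewrite /u; apply/rowP => i; rewrite !mxE; ring.
  rewrite dotvDl dotvBl dotvNl dotvZl dotvNl dotvv /D.
  ring.
rewrite dotvNr in Hz.
rewrite epz sqnormN -/D.
set uv := dotv u (z - p) in eB.
set gv := dotv (g z) (z - p) in Hz eB.
have h1 : - gv + mu * D <= gamma^-1 * B by lra.
have h2 : - (gamma * gv) + gamma * mu * D <= B.
  have := ler_wpM2l (ltW g0) h1.
  by rewrite mulrA mulfV ?gt_eqF // mul1r mulrDr mulrA mulrN.
have h3 : (1 + gamma * mu) * D <= - uv by lra.
have Y := youngN u (z - p) (1 + gamma * mu).
rewrite -/D -/uv in Y.
have c0 : 0 < 1 + gamma * mu by rewrite ltr_wpDr // mulr_ge0 // ltW.
nra.
Qed.
End Prox.


Section Lim.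
Context {R : realType}.

Lemma seq_lim (s : nat -> R) (C : R) : 0 <= C ->
  (forall n k, (n <= k)%N -> (s n - s k) ^+ 2 <= C * (n.+1%:R)^-1) ->
  exists l, forall n, (s n - l) ^+ 2 <= C * (n.+1%:R)^-1.
Proof.
move=> C0 Hc.
have cs : cvg (s @ \oo).
  apply/cauchy_cvgP/cauchy_exP => eps eps0.
  have e20 : 0 < eps ^+ 2 by rewrite exprn_gt0.
  have K0 : 0 <= C / eps ^+ 2 by rewrite divr_ge0 // ltW.
  set N := Num.bound (C / eps ^+ 2).
  have HN := archi_boundP K0; rewrite -/N in HN.
  exists (s N); apply: filterS (nbhs_infty_ge N) => n Nn /=.
  have h := Hc _ _ Nn.
  have HN1 : C / eps ^+ 2 < N.+1%:R by rewrite (lt_le_trans HN) // ler_nat.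
  have N10 : 0 < N.+1%:R :> R by rewrite ltr0Sn.
  have h2 : C * (N.+1%:R)^-1 < eps ^+ 2.
    rewrite ltr_pdivrMr // mulrC -ltr_pdivrMr //.
  rewrite /ball /= -normrN opprB.
  have : `|s n - s N| ^+ 2 < eps ^+ 2.
    rewrite real_normK ?num_real //.
    have -> : s n - s N = - (s N - s n) by rewrite opprB.
    by rewrite sqrrN (le_lt_trans h h2).
  rewrite ltr_pXn2r // ?nnegrE ?ltW //.
exists (lim (s @ \oo)) => n.
apply: (@cvgr_to_le nat \oo _ R (fun k => (s n - s k) ^+ 2)).
  have h1 : (fun k => s n - s k) @ \oo --> s n - lim (s @ \oo).
    by apply: cvgB => //; exact: cvg_cst.
  rewrite expr2; exact: (cvgM h1 h1).
by apply: filterS (nbhs_infty_ge n) => k nk; exact: Hc.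
Qed.

Lemma exists_min {d : nat} (h : 'rV[R]_d -> R) (G : 'rV[R]_d -> 'rV[R]_d) (m : R) :
  0 < m -> scg m h G -> exists p, forall x, h p <= h x.
Proof.
move=> m0 Hs.
have lb : forall x, h 0 - sqnorm (G 0) / (2 * m) <= h x.
  move=> x; have H := Hs x 0; rewrite subr0 in H.
  have Y := youngN (G 0) x m.
  have : - (dotv (G 0) x + m / 2 * sqnorm x) <= sqnorm (G 0) / (2 * m).
    rewrite ler_pdivlMr ?mulr_gt0 //; nra.
  lra.
set E := [set h x | x in setT].
have hE : has_inf E.
  split; first by exists (h 0), 0.
  by exists (h 0 - sqnorm (G 0) / (2 * m)) => _ [x _ <-]; exact: lb.
set M := inf E.
have HM : forall x, M <= h x by move=> x; apply: ge_inf (hE.2) _ _; exists x.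
have Had : forall n : nat, exists p, h p < M + (n.+1%:R)^-1.
  move=> n; have e0 : 0 < (n.+1%:R : R)^-1 by rewrite invr_gt0 ltr0Sn.
  have [_ [x _ <-] hx] := @inf_adherent R E _ e0 hE.
  by exists x.
have [ps Hps] := choice Had.
have mid : forall a b, m / 4 * sqnorm (a - b) <= h a + h b - 2 * M.
  move=> a b; set w := 2^-1 *: (a + b).
  have Ha := Hs a w; have Hb := Hs b w; have Hw := HM w.
  have ea : a - w = 2^-1 *: (a - b) by apply/rowP => i; rewrite !mxE; field.
  have eb : b - w = - 2^-1 *: (a - b) by apply/rowP => i; rewrite !mxE; field.
  rewrite ea sqnormZ dotvZr in Ha; rewrite eb sqnormZ dotvZr in Hb.
  have e4 : (2^-1 : R) ^+ 2 = 4^-1 by rewrite expr2 -invfM; congr (_^-1); ring.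
  rewrite sqrrN e4 in Hb; rewrite e4 in Ha.
  have e44 : m / 4 = m / 2 * 4^-1 + m / 2 * 4^-1 by field.
  rewrite e44; lra.
have q0 : forall n : nat, 0 < (n.+1%:R : R)^-1 by move=> n; rewrite invr_gt0 ltr0Sn.
have cb : forall n k (i : 'I_d), (n <= k)%N ->
    (ps n 0 i - ps k 0 i) ^+ 2 <= 8 / m * (n.+1%:R)^-1.
  move=> n k i nk.
  have h1 := coord_le_sqnorm (ps n - ps k) i; rewrite !mxE in h1.
  have h2 := mid (ps n) (ps k).
  have h3 := Hps n; have h4 := Hps k.
  have h5 : (k.+1%:R : R)^-1 <= (n.+1%:R)^-1.
    by rewrite lef_pV2 ?ler_nat ?posrE ?ltr0Sn.
  apply: (le_trans h1).
  rewrite mulrAC ler_pdivlMr //.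
  have -> : sqnorm (ps n - ps k) * m = 4 * (m / 4 * sqnorm (ps n - ps k)) by field.
  move: h2 h3 h4 h5; set qn := (n.+1%:R)^-1; set qk := (k.+1%:R)^-1.
  clearbody M qn qk; move=> *; lra.
have HL : forall i : 'I_d, exists l, forall n,
    (ps n 0 i - l) ^+ 2 <= 8 / m * (n.+1%:R)^-1.
  move=> i; apply: seq_lim; first by rewrite divr_ge0 // ltW.
  by move=> n k nk; exact: cb.
have [L HLs] := choice HL.
set p := \row_i L i.
set A := d%:R * (8 / m).
have A0 : 0 <= A by rewrite mulr_ge0 // divr_ge0 // ltW.
have Vb : forall n, sqnorm (ps n - p) <= A * (n.+1%:R)^-1.
  move=> n; rewrite /sqnorm.
  have : \sum_(i < d) ((ps n - p) 0 i) ^+ 2 <= \sum_(i < d) (8 / m * (n.+1%:R)^-1).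
    by apply: ler_sum => i _; rewrite !mxE; exact: HLs.
  move=> H; apply: le_trans H _.
  rewrite sumr_const card_ord -mulr_natl /A le_eqVlt; apply/orP; left; apply/eqP; ring.
exists p; move=> x; apply: le_trans (HM x).
apply/ler_addgt0Pr => e e0.
set P := sqnorm (G p).
have P0 : 0 <= P by exact: sqnorm_ge0.
set s := e / (P + 1).
have s0 : 0 < s by rewrite divr_gt0 //; lra.
have sP : s * P <= e by rewrite /s mulrAC ler_pdivrMr; nra.
clearbody s.
set B := 1 + A / (2 * s).
have B1 : 1 <= B by rewrite /B lerDl divr_ge0 // mulr_ge0 // ltW.
set K := 2 * B / e.
have K0 : 0 <= K by rewrite divr_ge0 // ?mulr_ge0 //; lra.
set N := Num.bound K.
have HN := archi_boundP K0; rewrite -/N in HN.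
set q := (N.+1%:R : R)^-1.
have qK : q * K < 1.
  rewrite /q mulrC ltr_pdivrMr ?ltr0Sn // mul1r (lt_le_trans HN) // ler_nat //.
have qB : q * B <= e / 2.
  have -> : q * B = (q * K) * (e / 2) by rewrite /K; field; lra.
  rewrite ler_pdivlMr //; nra.
have H1 := Hs (ps N) p.
have Y := youngN (ps N - p) (G p) s; rewrite dotvC -/P in Y.
set X := dotv (G p) (ps N - p) in H1 Y.
set V := sqnorm (ps N - p) in H1 Y.
have V0 : 0 <= V by exact: sqnorm_ge0.
have HX : - X <= V / (2 * s) + s * P / 2.
  have -> : V / (2 * s) + s * P / 2 = (V + s ^+ 2 * P) / (2 * s) by field; lra.
  rewrite ler_pdivlMr ?mulr_gt0 //; lra.
have HV : V / (2 * s) <= A * q / (2 * s).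
  by apply: ler_wpM2r; [rewrite invr_ge0 mulr_ge0 // ltW | exact: Vb].
have eB : q * B = q + A * q / (2 * s) by rewrite /B; field; lra.
have HpN := Hps N; rewrite -/q in HpN.
have hm : 0 <= m / 2 * V by rewrite mulr_ge0 // divr_ge0 // ltW.
clearbody q B M; lra.
Qed.
End Lim.


Lemma prox_bound {R : realType} {d : nat} (phi : 'rV[R]_d -> R) (mu gamma : R) y z :
  0 < mu -> 0 < gamma -> strongly_convex mu phi ->
  (1 + gamma * mu) ^+ 2 * sqnorm (prox phi gamma y - z)
    <= sqnorm (y - z - gamma *: grad phi z).
Proof.
move=> mu0 g0 Hsc.
have Hs : scg mu phi (grad phi) by exact: Hsc.
apply: (prox_contr mu phi (grad phi) gamma y (prox phi gamma y) z (ltW mu0) g0 Hs).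
rewrite /prox.
suff [p Hp] : exists p, forall x, phi p + (2 * gamma)^-1 * sqnorm (p - y)
                          <= phi x + (2 * gamma)^-1 * sqnorm (x - y).
  have := @xgetPex _ 0 [set p | forall x, phi p + (2 * gamma)^-1 * sqnorm (p - y)
                          <= phi x + (2 * gamma)^-1 * sqnorm (x - y)] (ex_intro _ p Hp).
  exact.
set h := fun x => phi x + (2 * gamma)^-1 * sqnorm (x - y).
set G := fun x => grad phi x + gamma^-1 *: (x - y).
have Hh : scg mu h G.
  move=> x w; rewrite /h /G.
  have e : x - y = (w - y) + (x - w) by apply/rowP => i; rewrite !mxE; ring.
  rewrite e (sqnormD (w - y)) dotvDl dotvZl.
  have := Hsc x w; have := sqnorm_ge0 (x - w).
  set S := sqnorm (x - w); set A := dotv (w - y) (x - w).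
  have ek : gamma^-1 = 2 * (2 * gamma)^-1 by rewrite invfM; field; lra.
  rewrite ek.
  have k0 : 0 <= (2 * gamma)^-1 by rewrite invr_ge0 mulr_ge0 // ltW.
  move=> S0 H; have : 0 <= (2 * gamma)^-1 * S by exact: mulr_ge0.
  lra.
have [p Hp] := exists_min h G mu mu0 Hh.
by exists p.
Qed.

Section Main.
Context (R : realType) (d : nat) (dx : measure_display) (Xi : measurableType dx)
  (D : probability Xi R) (F : Xi -> 'rV[R]_d -> R).

Lemma le_int_ge0 (f g : Xi -> \bar R) : (forall x, 0 <= f x)%E ->
  (forall x, f x <= g x)%E ->
  (\int[D]_(x in setT) f x <= \int[D]_(x in setT) g x)%E.
Proof.
move=> f0 fg.
have g0 : forall x, (0 <= g x)%E by move=> x; exact: le_trans (f0 x) (fg x).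
rewrite !ge0_integralTE //; apply: ereal_sup_le => _ [h Hh <-].
by exists h => // x; exact: le_trans (Hh x) (fg x).
Qed.

Lemma err_ge0 gamma xs k x : (0 <= sppm_gc_err D F gamma xs k x)%E.
Proof.
elim: k x => [|k IH] x /=; first by rewrite lee_fin sqnorm_ge0.
by apply: integral_ge0 => xi _; exact: IH.
Qed.

Lemma int_cst_prob (r : R) : (\int[D]_(xi in setT) (r%:E) = r%:E)%E.
Proof.
have h : (D setT = 1)%E := probability_setT D.
rewrite integral_cst //.
change (r%:E * D setT = r%:E)%E.
by rewrite h mule1. Qed.

Lemma gradf_xs0 (delta : R) xs :
  (forall x, (\int[D]_(xi in setT)
        (sqnorm (grad (F xi) x - gradf D F x - grad (F xi) xs))%:E
      <= (delta ^+ 2 * sqnorm (x - xs))%:E)%E) ->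
  gradf D F xs = 0.
Proof.
move=> Hd; have := Hd xs.
under eq_integral => xi _.
  have -> : grad (F xi) xs - gradf D F xs - grad (F xi) xs = - gradf D F xs.
    by apply/rowP => i; rewrite !mxE; ring.
  rewrite sqnormN; over.
rewrite int_cst_prob subrr sqnorm0 mulr0 lee_fin => H.
move: H; set gx := gradf D F xs => H.
apply/rowP => i; rewrite entry0; apply/eqP.
have := coord_le_sqnorm gx i.
have := sqr_ge0 (gx 0 i).
rewrite -sqrf_eq0 => h1 h2.
by rewrite eq_le h1 andbT (le_trans h2 H).
Qed.

Lemma int_bound_gen (delta gamma : R) (a gf : 'rV[R]_d) (gx gs : Xi -> 'rV[R]_d) :
  (forall i, D.-integrable setT (fun xi => (gx xi 0 i)%:E)) ->
  (forall i, D.-integrable setT (fun xi => (gs xi 0 i)%:E)) ->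
  (forall i, gf 0 i = Rintegral D setT (fun xi => gx xi 0 i)) ->
  (forall i, Rintegral D setT (fun xi => gs xi 0 i) = 0) ->
  (\int[D]_(xi in setT) (sqnorm (gx xi - gf - gs xi))%:E
      <= (delta ^+ 2 * sqnorm a)%:E)%E ->
  D.-integrable setT (fun xi => (sqnorm (a + gamma *: (gx xi - gf - gs xi)))%:E)
  /\ (\int[D]_(xi in setT) (sqnorm (a + gamma *: (gx xi - gf - gs xi)))%:E
      <= ((1 + gamma ^+ 2 * delta ^+ 2) * sqnorm a)%:E)%E.
Proof.
move=> Igx Igs gfE gs0 Hd.
pose hv := fun xi => gx xi - gf - gs xi.
have hvE : forall xi i, hv xi 0 i = gx xi 0 i - gf 0 i - gs xi 0 i.
  by move=> xi i; rewrite /hv !entryB.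
have mg : forall i, measurable_fun setT (fun xi => gx xi 0 i).
  by move=> i; apply/measurable_realfun.measurable_EFinP; exact: (measurable_int _ (Igx i)).
have ms : forall i, measurable_fun setT (fun xi => gs xi 0 i).
  by move=> i; apply/measurable_realfun.measurable_EFinP; exact: (measurable_int _ (Igs i)).
have mh : forall i, measurable_fun setT (fun xi => hv xi 0 i).
  move=> i.
  rewrite (_ : (fun xi => hv xi 0 i) =
     (fun xi => gx xi 0 i - gf 0 i - gs xi 0 i)); last first.
    by apply/funext => xi; rewrite hvE.
  apply: measurable_realfun.measurable_funB; last exact: ms.
  apply: measurable_realfun.measurable_funB; [exact: mg | exact: measurable_cst].
have msq : measurable_fun setT (fun xi => sqnorm (hv xi)).
  rewrite /sqnorm; apply: measurable_sum => i.
  rewrite (_ : (fun xi => hv xi 0 i ^+ 2) = (fun xi => hv xi 0 i * hv xi 0 i)); last first.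
    by apply/funext => xi; rewrite expr2.
  exact: measurable_realfun.measurable_funM.
have hvEE : forall i, (fun xi => (hv xi 0 i)%:E) =
    (fun xi => (gx xi 0 i)%:E - (gf 0 i)%:E - (gs xi 0 i)%:E)%E.
  by move=> i; apply/funext => xi; rewrite hvE !EFinB.
have ih : forall i, D.-integrable setT (fun xi => (hv xi 0 i)%:E).
  move=> i; rewrite hvEE.
  apply: integrableB => //; apply: integrableB => //.
  exact: finite_measure_integrable_cst.
have iint : forall i, (\int[D]_(xi in setT) (hv xi 0 i)%:E = 0)%E.
  move=> i; rewrite hvEE.
  rewrite integralB //; last first.
    by apply: integrableB => //; exact: finite_measure_integrable_cst.
  rewrite integralB //; last exact: finite_measure_integrable_cst.
  rewrite int_cst_prob.
  have f1 := integrable_fin_num measurableT (Igx i).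
  have f2 := integrable_fin_num measurableT (Igs i).
  rewrite -(fineK f1) -(fineK f2).
  have := gs0 i; rewrite /Rintegral => ->.
  have := gfE i; rewrite /Rintegral => <-.
  by rewrite -!EFinB subrr sub0r oppr0.
have dE : (fun xi => (dotv a (hv xi))%:E) =
    (fun xi => \sum_(i < d) ((a 0 i)%:E * (hv xi 0 i)%:E))%E.
  apply/funext => xi; rewrite /dotv -sumEFin.
  by apply: eq_bigr => i _; rewrite EFinM.
have dI : D.-integrable setT (fun xi => (dotv a (hv xi))%:E).
  rewrite dE; apply: (integrable_sum measurableT) => i _; exact: integrableZl.
have dint : (\int[D]_(xi in setT) (dotv a (hv xi))%:E = 0)%E.
  rewrite dE (integral_sum measurableT); last by move=> i; exact: integrableZl.
  rewrite big1 // => i _; rewrite integralZl //.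
  by rewrite iint mule0.
have sI : D.-integrable setT (fun xi => (sqnorm (hv xi))%:E).
  apply/integrableP; split; first exact/measurable_realfun.measurable_EFinP.
  rewrite (eq_integral (fun xi => (sqnorm (hv xi))%:E)); last first.
    by move=> xi _; rewrite /= ger0_norm // sqnorm_ge0.
  by apply: le_lt_trans Hd _; exact: ltry.
have ePhi : (fun xi => (sqnorm (a + gamma *: hv xi))%:E) =
   (fun xi => (sqnorm a)%:E + ((2 * gamma)%:E * (dotv a (hv xi))%:E
                + (gamma ^+ 2)%:E * (sqnorm (hv xi))%:E))%E.
  apply/funext => xi; rewrite sqnormD sqnormZ dotvZr -!EFinM -!EFinD.
  by congr (_%:E); ring.
have I1 : D.-integrable setT (fun xi => ((2 * gamma)%:E * (dotv a (hv xi))%:E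
                + (gamma ^+ 2)%:E * (sqnorm (hv xi))%:E)%E).
  by apply: integrableD => //; exact: integrableZl.
split.
  rewrite ePhi; apply: integrableD => //.
  exact: finite_measure_integrable_cst.
rewrite ePhi integralD //; last exact: finite_measure_integrable_cst.
rewrite integralD //; try exact: integrableZl.
rewrite int_cst_prob !integralZl // dint mule0 add0e.
have fI := integrable_fin_num measurableT sI.
move: Hd; rewrite -(fineK fI) -EFinM -EFinD !lee_fin => Hd.
have g2 : 0 <= gamma ^+ 2 by exact: sqr_ge0.
have := ler_wpM2l g2 Hd.
set r := fine _; move=> h.
have -> : (1 + gamma ^+ 2 * delta ^+ 2) * sqnorm a
   = sqnorm a + gamma ^+ 2 * (delta ^+ 2 * sqnorm a) by ring.
by rewrite lerD2l.
Qed.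
End Main.


Lemma vecid {R : realType} {d : nat} (x xs A B C : 'rV[R]_d) (g : R) :
  x + g *: (A - B) - xs - g *: C = x - xs + g *: (A - B - C).
Proof. by apply/rowP => i; rewrite !mxE; ring. Qed.

Lemma gradfE {R : realType} {d : nat} {dx : measure_display} {Xi : measurableType dx}
  (D : probability Xi R) (F : Xi -> 'rV[R]_d -> R) x i :
  gradf D F x 0 i = Rintegral D setT (fun xi => grad (F xi) x 0 i).
Proof. by rewrite /gradf mxE. Qed.

Theorem mainTheorem7 (R : realType) (d : nat) (dx : measure_display)
  (Xi : measurableType dx) (D : probability Xi R)
  (F : Xi -> 'rV[R]_d -> R) (mu delta gamma : R) (xs x0 : 'rV[R]_d) :
  0 < mu ->
  (forall xi x, differentiable (F xi) x) ->
  (forall xi, strongly_convex mu (F xi)) ->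
  (forall x, D.-integrable setT (fun xi => (F xi x)%:E)) ->
  (forall x (i : 'I_d), D.-integrable setT (fun xi => (grad (F xi) x 0 i)%:E)) ->
  (forall x, fexp D F xs <= fexp D F x) ->
  0 <= delta ->
  (forall x, (\int[D]_(xi in setT)
                (sqnorm (grad (F xi) x - gradf D F x - grad (F xi) xs))%:E
              <= (delta ^+ 2 * sqnorm (x - xs))%:E)%E) ->
  0 < gamma ->
  forall k : nat,
    (sppm_gc_err D F gamma xs k x0
     <= ((((1 + gamma ^+ 2 * delta ^+ 2) / (1 + gamma * mu) ^+ 2) ^+ k)
          * sqnorm (x0 - xs))%:E)%E.
Proof.
move=> mu0 _ Hsc _ Hint _ d0 Hd g0.
set c := (1 + gamma ^+ 2 * delta ^+ 2) / (1 + gamma * mu) ^+ 2.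
have gm0 : 0 < 1 + gamma * mu by rewrite ltr_wpDr // mulr_ge0 // ltW.
have gm20 : 0 < (1 + gamma * mu) ^+ 2 by rewrite exprn_gt0.
have c0 : 0 <= c.
  apply: divr_ge0; last exact: ltW.
  by apply: addr_ge0 => //; apply: mulr_ge0; exact: sqr_ge0.
have gxs0 := gradf_xs0 _ _ _ _ D F delta xs Hd.
have gs0 : forall i, Rintegral D setT (fun xi => grad (F xi) xs 0 i) = 0.
  move=> i; have := congr1 (fun v : 'rV[R]_d => v 0 i) gxs0.
  by rewrite /= entry0 gradfE.
suff H : forall k x, (sppm_gc_err D F gamma xs k x
     <= ((c ^+ k) * sqnorm (x - xs))%:E)%E by move=> k; exact: H.
elim=> [|k IH] x /=.
  by rewrite expr0 mul1r.
set q := ((1 + gamma * mu) ^+ 2)^-1.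
set Phi := fun xi => sqnorm (x - xs + gamma *:
       (grad (F xi) x - gradf D F x - grad (F xi) xs)).
have [IP IB] := int_bound_gen _ _ _ _ D delta gamma (x - xs) (gradf D F x)
   (fun xi => grad (F xi) x) (fun xi => grad (F xi) xs)
   (fun i => Hint x i) (fun i => Hint xs i) (fun i => gradfE D F x i) gs0 (Hd x).
have pw : forall xi, (sppm_gc_err D F gamma xs k (sppm_gc_step D F gamma xi x)
    <= ((c ^+ k * q) * Phi xi)%:E)%E.
  move=> xi; apply: le_trans (IH _) _; rewrite lee_fin -mulrA.
  apply: ler_wpM2l; first exact: exprn_ge0.
  have := prox_bound (F xi) mu gamma (x + gamma *: (grad (F xi) x - gradf D F x)) xs mu0 g0 (Hsc xi).
  rewrite vecid -/(Phi xi) => h.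
  by rewrite /q mulrC ler_pdivlMr // mulrC.
apply: le_trans (le_int_ge0 _ _ _ D _ _ (fun xi => err_ge0 _ _ _ _ D F gamma xs k _) pw) _.
rewrite (_ : (fun xi => ((c ^+ k * q) * Phi xi)%:E) =
             (fun xi => (c ^+ k * q)%:E * (Phi xi)%:E)%E); last first.
  by apply/funext => xi; rewrite EFinM.
rewrite integralZl //.
apply: le_trans (lee_wpmul2l _ IB) _.
  by rewrite lee_fin mulr_ge0 // ?exprn_ge0 // invr_ge0 ltW.
rewrite -EFinM lee_fin (exprSr c k).
have ec : c = (1 + gamma ^+ 2 * delta ^+ 2) * q by [].
set ck := c ^+ k; rewrite ec.
by rewrite le_eqVlt; apply/orP; left; apply/eqP; ring.
Qed.
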